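(* Let $n\ge 2k\ge 2$. The Kneser graph $K(n,k)$ admits perfect state transfer if and only if $n=2k$.
   Context: The Kneser graph $K(n,k)$ has as vertices the $k$-subsets of $\{1,\ldots,n\}$, two being adjacent iff they are disjoint. For a simple graph $X$ with adjacency matrix $A$, let $\mathcal{H}_X(t)=e^{itA}$. $X$ admits perfect state transfer (PST) from a vertex $u$ to a vertex $v\neq u$ at time $\tau>0$ if $|\mathcal{H}_X(\tau)_{u,v}|=1$; $X$ admits PST if this happens for some $u\ne v$ and some $\tau>0$. *)

(* Defs.v *)
From Stdlib Require Import Reals List Arith Bool.
Import ListNotations.
Open Scope R_scope.

(* (A^m)_{u,v} = number of walks of length m from u to v *)
Fixpoint walks {T : Type} (eqdec : forall x y : T, {x = y} + {x <> y})
  (V : list T) (adj : T -> T -> bool) (m : nat) (u v : T) : nat :=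
  match m with
  | O => if eqdec u v then 1%nat else 0%nat
  | S m' => fold_right Nat.add 0%nat
              (map (fun w => if adj u w then walks eqdec V adj m' w v else 0%nat) V)
  end.

Definition ipow_re (m : nat) : R :=
  match (m mod 4)%nat with 0%nat => 1 | 2%nat => -1 | _ => 0 end.
Definition ipow_im (m : nat) : R :=
  match (m mod 4)%nat with 1%nat => 1 | 3%nat => -1 | _ => 0 end.

(* H_X(t)_{u,v} = (e^{itA})_{u,v} = sum_m (i t)^m (A^m)_{u,v} / m!,
   given by its real part re and imaginary part im *)
Definition transition_entry {T : Type} (eqdec : forall x y : T, {x = y} + {x <> y})
  (V : list T) (adj : T -> T -> bool) (t : R) (u v : T) (re im : R) : Prop :=
  infinite_sum (fun m => ipow_re m * t ^ m / INR (fact m) * INR (walks eqdec V adj m u v)) re /\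
  infinite_sum (fun m => ipow_im m * t ^ m / INR (fact m) * INR (walks eqdec V adj m u v)) im.

Definition PST_at {T : Type} (eqdec : forall x y : T, {x = y} + {x <> y})
  (V : list T) (adj : T -> T -> bool) (u v : T) (tau : R) : Prop :=
  In u V /\ In v V /\ u <> v /\ 0 < tau /\
  exists re im, transition_entry eqdec V adj tau u v re im /\ re ^ 2 + im ^ 2 = 1.

Definition admits_PST {T : Type} (eqdec : forall x y : T, {x = y} + {x <> y})
  (V : list T) (adj : T -> T -> bool) : Prop :=
  exists u v tau, PST_at eqdec V adj u v tau.

(* A subset of {1,...,n} is encoded by its characteristic bool list of length n
   (position i <-> element i+1). *)
Fixpoint all_bool_lists (n : nat) : list (list bool) :=
  match n with
  | O => [[]]
  | S n' => map (cons true) (all_bool_lists n') ++ map (cons false) (all_bool_lists n')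
  end.

Definition card_true (l : list bool) : nat := length (filter (fun b => b) l).

Definition kneser_vertices (n k : nat) : list (list bool) :=
  filter (fun l => Nat.eqb (card_true l) k) (all_bool_lists n).

Definition disjointb (u v : list bool) : bool :=
  forallb (fun p => negb (fst p && snd p)) (combine u v).

Definition bl_eqdec : forall x y : list bool, {x = y} + {x <> y} :=
  list_eq_dec bool_dec.

Definition Kneser_admits_PST (n k : nat) : Prop :=
  admits_PST bl_eqdec (kneser_vertices n k) disjointb.

(* Main.v *)
Require Import Defs.
From Stdlib Require Import Reals List Arith.
From Stdlib Require Import Lia Permutation Lra Bool Classical.
From Coquelicot Require Import Coquelicot.
Import ListNotations.

Lemma In_all n l : In l (all_bool_lists n) <-> length l = n.
Proof.
  revert l; induction n; intros l; simpl.
  - split. intros [<-|[]]; auto. intros H; destruct l; simpl in *; auto; discriminate.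
  - rewrite in_app_iff, !in_map_iff. split.
    + intros [[l' [<- H]]|[l' [<- H]]]; simpl; f_equal; apply IHn; auto.
    + intros H. destruct l as [|b l']; simpl in H; [discriminate|]. injection H as H.
      destruct b; [left|right]; exists l'; split; auto; apply IHn; auto.
Qed.

Lemma NoDup_all n : NoDup (all_bool_lists n).
Proof.
  induction n; simpl. constructor; [simpl; auto| constructor].
  apply NoDup_app.
  - apply FinFun.Injective_map_NoDup; auto. intros a b H; injection H; auto.
  - apply FinFun.Injective_map_NoDup; auto. intros a b H; injection H; auto.
  - intros a H1 H2. apply in_map_iff in H1, H2. destruct H1 as [x [<- _]]. destruct H2 as [y [H _]]. discriminate.
Qed.

Lemma In_kv n k l : In l (kneser_vertices n k) <-> length l = n /\ card_true l = k.
Proof.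
  unfold kneser_vertices. rewrite filter_In, In_all, Nat.eqb_eq. tauto.
Qed.

Lemma NoDup_kv n k : NoDup (kneser_vertices n k).
Proof. apply NoDup_filter, NoDup_all. Qed.

Lemma disj_sym x y : disjointb x y = disjointb y x.
Proof.
  revert y; induction x; intros [|b y]; simpl; auto.
  unfold disjointb in *. simpl. rewrite IHx. rewrite (andb_comm b a). reflexivity.
Qed.

Lemma disj_nth x y : length x = length y ->
  (disjointb x y = true <-> forall p, (p < length x)%nat -> nth p x false && nth p y false = false).
Proof.
  revert y; induction x; intros [|b y] Hl; simpl in Hl; try discriminate.
  - simpl. split; auto. intros _ p Hp; simpl in Hp; lia.
  - injection Hl as Hl. unfold disjointb in *. simpl. rewrite andb_true_iff, IHx by auto.
    split.
    + intros [H1 H2] [|p] Hp; simpl. destruct (a && b); simpl in *; auto; discriminate.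
      apply H2; simpl in Hp; lia.
    + intros H. split. specialize (H 0%nat ltac:(simpl; lia)). simpl in H. rewrite H; auto.
      intros p Hp. apply (H (S p)). simpl; lia.
Qed.

Lemma card_perm l l' : Permutation l l' -> card_true l = card_true l'.
Proof. unfold card_true. intros HP; induction HP.
  - auto.
  - simpl. destruct x; simpl; lia.
  - simpl. destruct x; destruct y; simpl; lia.
  - lia. Qed.

Definition tr (i j p : nat) : nat := if Nat.eqb p i then j else if Nat.eqb p j then i else p.

Lemma tr_inv i j p : tr i j (tr i j p) = p.
Proof. unfold tr. destruct (Nat.eqb_spec p i); destruct (Nat.eqb_spec p j);
  repeat match goal with |- context [Nat.eqb ?a ?b] => is_var a; destruct (Nat.eqb_spec a b) end; lia. Qed.

Lemma tr_lt i j p n : (i < n)%nat -> (j < n)%nat -> (p < n)%nat -> (tr i j p < n)%nat.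
Proof. unfold tr. destruct (Nat.eqb p i); destruct (Nat.eqb p j); lia. Qed.

Lemma nth_map_lt {A B} (f : A -> B) s d a p : (p < length s)%nat -> nth p (map f s) d = f (nth p s a).
Proof. revert p; induction s; intros [|p] Hp; simpl in *; try lia; auto. apply IHs; lia. Qed.

Definition swp (i j : nat) (l : list bool) : list bool :=
  map (fun p => nth (tr i j p) l false) (seq 0 (length l)).

Lemma swp_len i j l : length (swp i j l) = length l.
Proof. unfold swp. rewrite length_map, length_seq. auto. Qed.

Lemma swp_nth i j l p : (p < length l)%nat -> nth p (swp i j l) false = nth (tr i j p) l false.
Proof.
  intros Hp. unfold swp.
  rewrite (nth_map_lt _ _ _ 0%nat) by (rewrite length_seq; auto). rewrite seq_nth by auto. reflexivity.
Qed.

Lemma swp_perm i j l : (i < length l)%nat -> (j < length l)%nat -> Permutation (swp i j l) l.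
Proof.
  intros Hi Hj.
  assert (El : l = map (fun p => nth p l false) (seq 0 (length l))).
  { apply (nth_ext _ _ false false). rewrite length_map, length_seq; auto.
    intros n Hn. rewrite (nth_map_lt _ _ _ 0%nat) by (rewrite length_seq; auto). rewrite seq_nth by auto. reflexivity. }
  unfold swp. rewrite <- map_map with (f := tr i j) (g := fun p => nth p l false).
  apply Permutation_trans with (map (fun p => nth p l false) (seq 0 (length l))); [|rewrite <- El; reflexivity].
  apply Permutation_map.
  apply Permutation_map_same_l.
  - apply FinFun.Injective_map_NoDup. intros a b H. rewrite <- (tr_inv i j a), <- (tr_inv i j b), H. auto.
    apply seq_NoDup.
  - intros z Hz. apply in_map_iff in Hz. destruct Hz as [w [<- Hw]]. apply in_seq in Hw. apply in_seq.
    pose proof (tr_lt i j w (length l) Hi Hj ltac:(lia)). lia.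
Qed.

Lemma swp_swp i j l : (i < length l)%nat -> (j < length l)%nat -> swp i j (swp i j l) = l.
Proof.
  intros Hi Hj. apply (nth_ext _ _ false false). rewrite !swp_len; auto.
  intros p Hp. rewrite !swp_len in Hp. rewrite swp_nth by (rewrite swp_len; auto).
  rewrite swp_nth by (apply tr_lt; auto). rewrite tr_inv. auto.
Qed.

Lemma swp_disj i j x y : length x = length y -> (i < length x)%nat -> (j < length x)%nat ->
  disjointb (swp i j x) (swp i j y) = disjointb x y.
Proof.
  intros Hl Hi Hj. apply eq_true_iff_eq. rewrite !disj_nth by (rewrite ?swp_len; auto).
  rewrite swp_len. split; intros H p Hp.
  - specialize (H (tr i j p) ltac:(apply tr_lt; auto)).
    rewrite !swp_nth in H by (try rewrite <- Hl; apply tr_lt; auto). rewrite tr_inv in H. auto.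
  - rewrite !swp_nth by (try rewrite <- Hl; auto). apply H. apply tr_lt; auto.
Qed.

Lemma swp_fix i j l : (i < length l)%nat -> (j < length l)%nat -> nth i l false = nth j l false -> swp i j l = l.
Proof.
  intros Hi Hj H. apply (nth_ext _ _ false false). rewrite swp_len; auto.
  intros p Hp. rewrite swp_len in Hp. rewrite swp_nth by auto. unfold tr.
  destruct (Nat.eqb_spec p i); destruct (Nat.eqb_spec p j); subst; auto.
Qed.

Lemma swp_move i j l : (i < length l)%nat -> (j < length l)%nat -> nth i l false <> nth j l false -> swp i j l <> l.
Proof.
  intros Hi Hj H E. apply H. rewrite <- E at 1. rewrite swp_nth by auto. unfold tr. rewrite Nat.eqb_refl. auto.
Qed.

Lemma card_all_false l : (forall p, (p < length l)%nat -> nth p l false = false) -> card_true l = 0%nat.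
Proof.
  induction l; intros H; auto. unfold card_true in *. simpl.
  pose proof (H 0%nat ltac:(simpl; lia)) as H0. simpl in H0. subst. apply IHl.
  intros p Hp. apply (H (S p)). simpl; lia.
Qed.

Lemma card_all_true l : (forall p, (p < length l)%nat -> nth p l false = true) -> card_true l = length l.
Proof.
  induction l; intros H; auto. unfold card_true in *. simpl.
  pose proof (H 0%nat ltac:(simpl; lia)) as H0. simpl in H0. subst. simpl. f_equal. apply IHl.
  intros p Hp. apply (H (S p)). simpl; lia.
Qed.

Lemma card_le l : (card_true l <= length l)%nat.
Proof. unfold card_true. apply filter_length_le. Qed.

Lemma card_negb l : (card_true (map negb l) + card_true l = length l)%nat.
Proof. induction l; unfold card_true in *; simpl; auto. destruct a; simpl; lia. Qed.

Lemma card_const (l : list bool) b : card_true (map (fun _ => b) l) = if b then length l else 0%nat.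
Proof. induction l; unfold card_true in *; simpl; destruct b; simpl; auto. Qed.

Lemma combin n k u v : (1 <= k)%nat -> (2 * k < n)%nat ->
  length u = n -> length v = n -> card_true u = k -> card_true v = k -> u <> v ->
  exists i j, (i < n)%nat /\ (j < n)%nat /\ nth i v false = nth j v false /\ nth i u false <> nth j u false.
Proof.
  intros Hk Hn Hu Hv Hcu Hcv Huv.
  apply NNPP. intros Hno.
  assert (H : forall i j, (i < n)%nat -> (j < n)%nat -> nth i v false = nth j v false -> nth i u false = nth j u false).
  { intros i j Hi Hj E. apply NNPP. intros Ne. apply Hno. exists i, j. auto. }
  assert (Hp : exists p, (p < n)%nat /\ nth p v false = true).
  { apply NNPP. intros Hp. assert (card_true v = 0%nat); [|lia].
    apply card_all_false. intros p Hp'. destruct (nth p v false) eqn:E; auto. exfalso; apply Hp; exists p; split; auto; lia. }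
  assert (Hq : exists q, (q < n)%nat /\ nth q v false = false).
  { apply NNPP. intros Hq. assert (card_true v = length v); [|lia].
    apply card_all_true. intros p Hp'. destruct (nth p v false) eqn:E; auto. exfalso; apply Hq; exists p; split; auto; lia. }
  destruct Hp as [p [Hp Ep]]. destruct Hq as [q [Hq Eq]].
  set (f := fun b : bool => if b then nth p u false else nth q u false).
  assert (Hu' : u = map f v).
  { apply (nth_ext _ _ false false). rewrite length_map; lia.
    intros i Hi. rewrite (nth_map_lt _ _ _ false) by lia.
    unfold f. destruct (nth i v false) eqn:E.
    - apply H; [lia|lia|rewrite E, Ep; auto].
    - apply H; [lia|lia|rewrite E, Eq; auto]. }
  unfold f in Hu'. destruct (nth p u false); destruct (nth q u false).
  - rewrite (map_ext _ (fun _ => true)) in Hu' by (intros [|]; auto). rewrite Hu', card_const in Hcu. lia.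
  - rewrite (map_ext _ (fun b => b)) in Hu' by (intros [|]; auto). rewrite map_id in Hu'. auto.
  - rewrite (map_ext _ negb) in Hu' by (intros [|]; auto). pose proof (card_negb v). rewrite <- Hu' in H0. lia.
  - rewrite (map_ext _ (fun _ => false)) in Hu' by (intros [|]; auto). rewrite Hu', card_const in Hcu. lia.
Qed.

Lemma disj_negb x : disjointb x (map negb x) = true.
Proof. induction x; auto. unfold disjointb in *; simpl. rewrite IHx. destruct a; auto. Qed.

Lemma disj_card x w : length x = length w -> disjointb x w = true -> (card_true x + card_true w <= length x)%nat.
Proof.
  revert w; induction x; intros [|b w] Hl Hd; simpl in Hl; try discriminate; auto.
  injection Hl as Hl. unfold disjointb in *. simpl in Hd. apply andb_true_iff in Hd. destruct Hd as [H1 H2].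
  specialize (IHx w Hl H2). unfold card_true in *. simpl. destruct a; destruct b; simpl in *; try discriminate; lia.
Qed.

Lemma disj_eq x w : length x = length w -> disjointb x w = true -> (card_true x + card_true w = length x)%nat ->
  w = map negb x.
Proof.
  revert w; induction x; intros [|b w] Hl Hd Hc; simpl in Hl; try discriminate; auto.
  injection Hl as Hl. unfold disjointb in *. simpl in Hd. apply andb_true_iff in Hd. destruct Hd as [H1 H2].
  pose proof (disj_card x w Hl H2). unfold card_true in *. simpl in *.
  destruct a; destruct b; simpl in *; try discriminate; f_equal; try (apply IHx; auto; lia); lia.
Qed.

Lemma negb_negb_map x : map negb (map negb x) = x.
Proof. induction x; simpl; auto. rewrite negb_involutive, IHx. auto. Qed.

Lemma nbr2k k x w : In x (kneser_vertices (2 * k) k) -> In w (kneser_vertices (2 * k) k) ->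
  (disjointb x w = true <-> w = map negb x).
Proof.
  rewrite !In_kv. intros [Hx Cx] [Hw Cw]. split.
  - intros Hd. apply disj_eq; auto; lia.
  - intros ->. apply disj_negb.
Qed.

Lemma natsum_single {T} (adj : T -> bool) (f : T -> nat) V c : NoDup V -> In c V ->
  (forall w, In w V -> (adj w = true <-> w = c)) ->
  fold_right Nat.add 0%nat (map (fun w => if adj w then f w else 0%nat) V) = f c.
Proof.
  induction V; intros Hnd Hc H; [destruct Hc|]. inversion Hnd; subst. simpl.
  destruct Hc as [<-|Hc].
  - assert (adj a = true) by (apply H; simpl; auto). rewrite H0.
    assert (fold_right Nat.add 0%nat (map (fun w => if adj w then f w else 0%nat) V) = 0%nat); [|lia].
    clear IHV. assert (forall w, In w V -> adj w = false).
    { intros w Hw. destruct (adj w) eqn:E; auto. apply H in E; simpl; auto. subst; tauto. }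
    clear H H0 Hnd. induction V; simpl; auto. rewrite H1; simpl; auto. apply IHV.
    intros Hin; apply H2; simpl; auto. inversion H3; auto. intros; apply H1; simpl; auto.
  - assert (adj a = false). { destruct (adj a) eqn:E; auto. apply H in E; simpl; auto. subst; tauto. }
    rewrite H0. simpl. apply IHV; auto. intros; apply H; simpl; auto.
Qed.

Open Scope R_scope.

Definition rsum {T : Type} (f : T -> R) (l : list T) : R := fold_right Rplus 0 (map f l).

Lemma rsum_nil {T} (f : T -> R) : rsum f [] = 0. Proof. reflexivity. Qed.
Lemma rsum_cons {T} (f : T -> R) a l : rsum f (a :: l) = f a + rsum f l. Proof. reflexivity. Qed.

Lemma rsum_ext {T} (f g : T -> R) l : (forall x, In x l -> f x = g x) -> rsum f l = rsum g l.
Proof. induction l; intros H; simpl; auto. unfold rsum in *; simpl. rewrite H by (left; auto).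
  rewrite IHl; auto. intros; apply H; right; auto. Qed.

Lemma rsum_plus {T} (f g : T -> R) l : rsum (fun x => f x + g x) l = rsum f l + rsum g l.
Proof. induction l; unfold rsum in *; simpl; [lra|]. rewrite IHl; lra. Qed.

Lemma rsum_scal {T} c (f : T -> R) l : rsum (fun x => c * f x) l = c * rsum f l.
Proof. induction l; unfold rsum in *; simpl; [lra|]. rewrite IHl; lra. Qed.

Lemma rsum_opp {T} (f : T -> R) l : rsum (fun x => - f x) l = - rsum f l.
Proof. induction l; unfold rsum in *; simpl; [lra|]. rewrite IHl; lra. Qed.

Lemma rsum_zero {T} (l : list T) : rsum (fun _ => 0) l = 0.
Proof. induction l; unfold rsum in *; simpl; lra. Qed.

Lemma rsum_swap {T U} (F : T -> U -> R) l1 l2 :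
  rsum (fun x => rsum (fun y => F x y) l2) l1 = rsum (fun y => rsum (fun x => F x y) l1) l2.
Proof.
  induction l1; simpl.
  - rewrite rsum_nil. symmetry. apply rsum_zero.
  - rewrite rsum_cons, IHl1. rewrite <- rsum_plus. apply rsum_ext. intros. rewrite rsum_cons. reflexivity.
Qed.

Lemma rsum_nonneg {T} (f : T -> R) l : (forall x, 0 <= f x) -> 0 <= rsum f l.
Proof. intros H; induction l; unfold rsum in *; simpl; [lra|]. specialize (H a); lra. Qed.

Lemma rsum_le {T} (f g : T -> R) l : (forall x, In x l -> f x <= g x) -> rsum f l <= rsum g l.
Proof. induction l; intros H; unfold rsum in *; simpl; [lra|].
  assert (f a <= g a) by (apply H; left; auto).
  assert (fold_right Rplus 0 (map f l) <= fold_right Rplus 0 (map g l)) by (apply IHl; intros; apply H; right; auto).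
  lra. Qed.

Lemma rsum_const {T} c (l : list T) : rsum (fun _ => c) l = INR (length l) * c.
Proof. induction l; unfold rsum in *; simpl; [lra|]. rewrite IHl. destruct (length l); simpl; lra. Qed.

Lemma rsum_ge1 {T} (f : T -> R) l y : (forall x, 0 <= f x) -> In y l -> f y <= rsum f l.
Proof. intros H; induction l; simpl; [tauto|]. intros [<-|Hy]; rewrite rsum_cons.
  - pose proof (rsum_nonneg f l H); lra.
  - pose proof (H a); specialize (IHl Hy); lra. Qed.

Lemma rsum_ge2 {T} (f : T -> R) l x y : (forall x, 0 <= f x) -> NoDup l -> In x l -> In y l -> x <> y ->
  f x + f y <= rsum f l.
Proof. intros H; induction l; intros Hnd Hx Hy Hxy; [destruct Hx|]. inversion Hnd; subst. rewrite rsum_cons.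
  destruct Hx as [<-|Hx]; destruct Hy as [<-|Hy].
  - congruence.
  - pose proof (rsum_ge1 f l y H Hy). lra.
  - pose proof (rsum_ge1 f l x H Hx). lra.
  - pose proof (H a). specialize (IHl H3 Hx Hy Hxy). lra. Qed.

Lemma rsum_indicator {T} (eqdec : forall x y : T, {x = y} + {x <> y}) (l : list T) v :
  NoDup l -> In v l -> rsum (fun u => if eqdec u v then 1 else 0) l = 1.
Proof.
  induction l; intros Hnd Hv; [destruct Hv|]. inversion Hnd; subst. rewrite rsum_cons.
  destruct (eqdec a v).
  - subst. rewrite (rsum_ext _ (fun _ => 0)). rewrite rsum_zero; lra.
    intros x Hx. destruct (eqdec x v); subst; tauto.
  - destruct Hv as [->|Hv]; [congruence|]. rewrite IHl; auto; lra.
Qed.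

Lemma INR_fold {T} (g : T -> nat) l : INR (fold_right Nat.add 0%nat (map g l)) = rsum (fun x => INR (g x)) l.
Proof. induction l; unfold rsum in *; simpl; auto. rewrite plus_INR, IHl. reflexivity. Qed.
Lemma cv_inf (a : nat -> R) (L : R) : 0 <= L -> (forall m, Rabs (a m) <= L ^ m / INR (fact m)) ->
  forall x, Rbar_lt (Rabs x) (CV_radius a).
Proof.
  intros HL Ha x.
  assert (Hr : 0 < Rabs x + 1) by (pose proof (Rabs_pos x); lra).
  set (r := mkposreal _ Hr).
  assert (Hc : CVN_r (fun n y => a n * y ^ n) r).
  { exists (fun n => / INR (fact n) * (L * r) ^ n). exists (exp (L * r)). split.
    - pose proof (proj2_sig (exist_exp (L * r))) as He. change (exp_in (L*r) (exp (L*r))) in He.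
      unfold exp_in, infinite_sum in He. intros eps Heps. destruct (He eps Heps) as [N HN].
      exists N. intros n Hn. rewrite (sum_eq _ (fun i => / INR (fact i) * (L * r) ^ i)). auto.
      intros i _. apply Rabs_right. apply Rle_ge, Rmult_le_pos.
      left; apply Rinv_0_lt_compat, INR_fact_lt_0. apply pow_le. apply Rmult_le_pos; auto. simpl; lra.
    - intros n y Hy. unfold Boule in Hy. simpl in Hy. rewrite Rminus_0_r in Hy.
      rewrite Rabs_mult, <- RPow_abs. rewrite Rpow_mult_distr.
      apply Rle_trans with (L ^ n / INR (fact n) * (Rabs x + 1) ^ n).
      + apply Rmult_le_compat; auto using Rabs_pos. apply pow_le, Rabs_pos.
        apply pow_incr. split; [apply Rabs_pos| lra].
      + simpl. unfold Rdiv. lra. }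
  pose proof (CV_radius_Reals_1 a r Hc) as H.
  destruct (CV_radius a) as [c| |]; simpl in *; lra.
Qed.

Lemma mod4 q r : (r < 4)%nat -> ((4 * q + r) mod 4 = r)%nat.
Proof. intros. symmetry. apply (Nat.mod_unique _ _ q); lia. Qed.

Lemma ipow_S m : ipow_re (S m) = - ipow_im m /\ ipow_im (S m) = ipow_re m.
Proof.
  pose proof (Nat.div_mod m 4 ltac:(lia)) as Hm.
  pose proof (Nat.mod_upper_bound m 4 ltac:(lia)).
  set (q := (m / 4)%nat) in *. set (r := (m mod 4)%nat) in *.
  unfold ipow_re, ipow_im. fold r.
  destruct r as [|[|[|[|r']]]] eqn:E; [..| lia].
  - rewrite Hm. replace (S (4 * q + 0)) with (4 * q + 1)%nat by lia. rewrite mod4 by lia. split; lra.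
  - rewrite Hm. replace (S (4 * q + 1)) with (4 * q + 2)%nat by lia. rewrite mod4 by lia. split; lra.
  - rewrite Hm. replace (S (4 * q + 2)) with (4 * q + 3)%nat by lia. rewrite mod4 by lia. split; lra.
  - rewrite Hm. replace (S (4 * q + 3)) with (4 * (S q) + 0)%nat by lia. rewrite mod4 by lia. split; lra.
Qed.

Lemma ipow_bound m : Rabs (ipow_re m) <= 1 /\ Rabs (ipow_im m) <= 1.
Proof.
  unfold ipow_re, ipow_im. destruct (m mod 4)%nat as [|[|[|[|]]]];
  split; unfold Rabs; destruct Rcase_abs; lra.
Qed.

Lemma is_pseries_zero (x : R) : is_pseries (fun _ : nat => 0) x 0.
Proof.
  unfold is_pseries. apply (is_series_ext (fun _ => 0)).
  intros n. change (0 = pow_n x n * 0). ring.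
  apply is_series_Reals. intros eps Heps. exists O. intros n _.
  rewrite sum_eq_R0 by auto. unfold R_dist. rewrite Rminus_0_r, Rabs_R0. auto.
Qed.

Lemma is_pseries_rsum {T} (g : T -> nat -> R) (G : T -> R) l x :
  (forall w, In w l -> is_pseries (g w) x (G w)) ->
  is_pseries (fun m => rsum (fun w => g w m) l) x (rsum G l).
Proof.
  induction l; intros H.
  - apply (is_pseries_ext (fun _ => 0)). intros; reflexivity. apply is_pseries_zero.
  - rewrite rsum_cons. apply (is_pseries_ext (PS_plus (g a) (fun m => rsum (fun w => g w m) l))).
    intros n. reflexivity.
    change (G a + rsum G l) with (plus (G a) (rsum G l)).
    apply (is_pseries_plus (K := R_AbsRing) (V := R_NormedModule)). apply H; left; auto. apply IHl. intros; apply H; right; auto.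
Qed.

Section Gen.
End Gen.

Definition Wk {T} eqdec (V : list T) adj m u v : R := INR (walks eqdec V adj m u v).

Lemma Wk_S {T} eqdec (V : list T) adj m u v :
  Wk eqdec V adj (S m) u v = rsum (fun w => if adj u w then Wk eqdec V adj m w v else 0) V.
Proof. unfold Wk. simpl walks. rewrite INR_fold. apply rsum_ext. intros w _. destruct (adj u w); auto. Qed.

Lemma Wk_bound {T} eqdec (V : list T) adj m u v :
  0 <= Wk eqdec V adj m u v <= INR (length V) ^ m.
Proof.
  revert u; induction m; intros u.
  - unfold Wk; simpl. destruct (eqdec u v); simpl; lra.
  - split. apply pos_INR. rewrite Wk_S.
    apply Rle_trans with (rsum (fun _ => INR (length V) ^ m) V).
    apply rsum_le. intros w _. destruct (adj u w). apply IHm. apply pow_le, pos_INR.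
    rewrite rsum_const. simpl. lra.
Qed.

Definition are {T} eqdec (V : list T) adj v u m : R :=
  ipow_re m / INR (fact m) * Wk eqdec V adj m u v.
Definition aim {T} eqdec (V : list T) adj v u m : R :=
  ipow_im m / INR (fact m) * Wk eqdec V adj m u v.

Lemma coef_bound (c : nat -> R) (w : nat -> R) L :
  (forall m, Rabs (c m) <= 1) -> (forall m, 0 <= w m <= L ^ m) ->
  forall m, Rabs (c m / INR (fact m) * w m) <= L ^ m / INR (fact m).
Proof.
  intros Hc Hw m. pose proof (INR_fact_lt_0 m).
  rewrite Rabs_mult. unfold Rdiv. rewrite Rabs_mult.
  rewrite (Rabs_right (/ _)) by (apply Rle_ge; left; apply Rinv_0_lt_compat; auto).
  rewrite (Rabs_right (w m)) by (apply Rle_ge; apply Hw).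
  specialize (Hc m); specialize (Hw m).
  assert (0 < / INR (fact m)) by (apply Rinv_0_lt_compat; auto).
  assert (H1 : Rabs (c m) * / INR (fact m) <= / INR (fact m)) by nra.
  assert (H2 : Rabs (c m) * / INR (fact m) * w m <= / INR (fact m) * w m) by (pose proof (Rabs_pos (c m)); nra).
  unfold Rdiv. nra.
Qed.

Lemma are_cv {T} eqdec (V : list T) adj v u x : Rbar_lt (Rabs x) (CV_radius (are eqdec V adj v u)).
Proof.
  apply (cv_inf _ (INR (length V))). apply pos_INR. unfold are.
  apply (coef_bound ipow_re (fun m => Wk eqdec V adj m u v)).
  intros; apply ipow_bound. intros; apply Wk_bound.
Qed.
Lemma aim_cv {T} eqdec (V : list T) adj v u x : Rbar_lt (Rabs x) (CV_radius (aim eqdec V adj v u)).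
Proof.
  apply (cv_inf _ (INR (length V))). apply pos_INR. unfold aim.
  apply (coef_bound ipow_im (fun m => Wk eqdec V adj m u v)).
  intros; apply ipow_bound. intros; apply Wk_bound.
Qed.

Definition Rf {T} eqdec (V : list T) adj v u t := PSeries (are eqdec V adj v u) t.
Definition If {T} eqdec (V : list T) adj v u t := PSeries (aim eqdec V adj v u) t.

Lemma Rf_is {T} eqdec (V : list T) adj v u t : is_pseries (are eqdec V adj v u) t (Rf eqdec V adj v u t).
Proof. apply PSeries_correct, CV_radius_inside, are_cv. Qed.
Lemma If_is {T} eqdec (V : list T) adj v u t : is_pseries (aim eqdec V adj v u) t (If eqdec V adj v u t).
Proof. apply PSeries_correct, CV_radius_inside, aim_cv. Qed.

Lemma fact_S_INR m : INR (fact (S m)) = INR (S m) * INR (fact m).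
Proof. change (fact (S m)) with (S m * fact m)%nat. apply mult_INR. Qed.

Lemma are_deriv {T} eqdec (V : list T) adj v u m :
  PS_derive (are eqdec V adj v u) m = - rsum (fun w => if adj u w then aim eqdec V adj v w m else 0) V.
Proof.
  unfold PS_derive, are, aim. rewrite Wk_S, fact_S_INR. destruct (ipow_S m) as [-> _].
  pose proof (INR_fact_lt_0 m). assert (0 < INR (S m)) by (apply lt_0_INR; lia).
  rewrite <- rsum_opp. rewrite <- rsum_scal. rewrite <- rsum_scal. apply rsum_ext. intros w _.
  destruct (adj u w); field; lra.
Qed.

Lemma aim_deriv {T} eqdec (V : list T) adj v u m :
  PS_derive (aim eqdec V adj v u) m = rsum (fun w => if adj u w then are eqdec V adj v w m else 0) V.
Proof.
  unfold PS_derive, are, aim. rewrite Wk_S, fact_S_INR. destruct (ipow_S m) as [_ ->].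
  pose proof (INR_fact_lt_0 m). assert (0 < INR (S m)) by (apply lt_0_INR; lia).
  rewrite <- rsum_scal. rewrite <- rsum_scal. apply rsum_ext. intros w _.
  destruct (adj u w); field; lra.
Qed.

Lemma Rf_derive {T} eqdec (V : list T) adj v u t :
  is_derive (Rf eqdec V adj v u) t (- rsum (fun w => if adj u w then If eqdec V adj v w t else 0) V).
Proof.
  replace (- rsum _ V) with (PSeries (PS_derive (are eqdec V adj v u)) t).
  apply is_derive_PSeries, are_cv.
  apply is_pseries_unique. apply (is_pseries_ext (PS_opp (fun m => rsum (fun w => if adj u w then aim eqdec V adj v w m else 0) V))).
  intros n. rewrite are_deriv. reflexivity.
  apply (is_pseries_opp (K := R_AbsRing) (V := R_NormedModule)).
  apply (is_pseries_rsum (fun w m => if adj u w then aim eqdec V adj v w m else 0)).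
  intros w _. destruct (adj u w). apply If_is. apply is_pseries_zero.
Qed.

Lemma If_derive {T} eqdec (V : list T) adj v u t :
  is_derive (If eqdec V adj v u) t (rsum (fun w => if adj u w then Rf eqdec V adj v w t else 0) V).
Proof.
  replace (rsum _ V) with (PSeries (PS_derive (aim eqdec V adj v u)) t).
  apply is_derive_PSeries, aim_cv.
  apply is_pseries_unique. apply (is_pseries_ext (fun m => rsum (fun w => if adj u w then are eqdec V adj v w m else 0) V)).
  intros n. rewrite aim_deriv. reflexivity.
  apply (is_pseries_rsum (fun w m => if adj u w then are eqdec V adj v w m else 0)).
  intros w _. destruct (adj u w). apply Rf_is. apply is_pseries_zero.
Qed.

Lemma is_derive_rsum {T} (F : T -> R -> R) (dF : T -> R) l t :
  (forall w, In w l -> is_derive (F w) t (dF w)) ->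
  is_derive (fun s => rsum (fun w => F w s) l) t (rsum dF l).
Proof.
  induction l; intros H.
  - apply (is_derive_ext (fun _ => 0)). intros; reflexivity.
    rewrite rsum_nil. apply (is_derive_const (K := R_AbsRing) (V := R_NormedModule) 0 t).
  - rewrite rsum_cons. apply (is_derive_ext (fun s => plus (F a s) (rsum (fun w => F w s) l))).
    intros; reflexivity.
    change (dF a + rsum dF l) with (plus (dF a) (rsum dF l)).
    apply (is_derive_plus (K := R_AbsRing) (V := R_NormedModule)). apply H; left; auto.
    apply IHl. intros; apply H; right; auto.
Qed.

Lemma quad_zero {T} (V : list T) (adj : T -> T -> bool) (X Y : T -> R) :
  (forall x y, adj x y = adj y x) ->
  rsum (fun u => ((- rsum (fun w => if adj u w then Y w else 0) V) * X u
                 + X u * (- rsum (fun w => if adj u w then Y w else 0) V))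
                 + (rsum (fun w => if adj u w then X w else 0) V * Y u
                 + Y u * rsum (fun w => if adj u w then X w else 0) V)) V = 0.
Proof.
  intros Hsym.
  rewrite (rsum_ext _ (fun u => - (2 * rsum (fun w => if adj u w then X u * Y w else 0) V)
                                + 2 * rsum (fun w => if adj u w then Y u * X w else 0) V)).
  - rewrite rsum_plus, rsum_opp, !rsum_scal.
    rewrite (rsum_swap (fun u w => if adj u w then Y u * X w else 0)).
    rewrite (rsum_ext (fun y => rsum (fun x => if adj x y then Y x * X y else 0) V)
                      (fun y => rsum (fun x => if adj y x then X y * Y x else 0) V)).
    lra. intros y _. apply rsum_ext. intros x _. rewrite Hsym. destruct (adj y x); lra.
  - intros u _. rewrite <- !rsum_scal.
    assert (E1 : rsum (fun w => if adj u w then X u * Y w else 0) V =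
                 X u * rsum (fun w => if adj u w then Y w else 0) V).
    { rewrite <- rsum_scal. apply rsum_ext. intros; destruct (adj u x); lra. }
    assert (E2 : rsum (fun w => if adj u w then Y u * X w else 0) V =
                 Y u * rsum (fun w => if adj u w then X w else 0) V).
    { rewrite <- rsum_scal. apply rsum_ext. intros; destruct (adj u x); lra. }
    rewrite !rsum_scal. rewrite E1, E2. ring.
Qed.

Definition Gt {T} eqdec (V : list T) adj v t :=
  rsum (fun u => Rf eqdec V adj v u t * Rf eqdec V adj v u t + If eqdec V adj v u t * If eqdec V adj v u t) V.

Lemma Gt_derive {T} eqdec (V : list T) adj v t :
  (forall x y, adj x y = adj y x) -> is_derive (Gt eqdec V adj v) t 0.
Proof.
  intros Hsym. unfold Gt.
  rewrite <- (quad_zero V adj (fun u => Rf eqdec V adj v u t) (fun u => If eqdec V adj v u t) Hsym).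
  apply (is_derive_rsum (fun u s => Rf eqdec V adj v u s * Rf eqdec V adj v u s + If eqdec V adj v u s * If eqdec V adj v u s)).
  intros u _.
  apply (is_derive_plus (K := R_AbsRing) (V := R_NormedModule)
         (fun s => Rf eqdec V adj v u s * Rf eqdec V adj v u s)
         (fun s => If eqdec V adj v u s * If eqdec V adj v u s)).
  - apply (is_derive_mult (K := R_AbsRing)); [apply Rf_derive|apply Rf_derive|intros; apply Rmult_comm].
  - apply (is_derive_mult (K := R_AbsRing)); [apply If_derive|apply If_derive|intros; apply Rmult_comm].
Qed.

Lemma Gt_0 {T} eqdec (V : list T) adj v : NoDup V -> In v V -> Gt eqdec V adj v 0 = 1.
Proof.
  intros Hnd Hv. unfold Gt, Rf, If. rewrite <- (rsum_indicator eqdec V v Hnd Hv).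
  apply rsum_ext. intros u _. rewrite !PSeries_0. unfold are, aim, Wk, ipow_re, ipow_im. simpl.
  destruct (eqdec u v); simpl; lra.
Qed.

Lemma Gt_1 {T} eqdec (V : list T) adj v t : NoDup V -> In v V -> (forall x y, adj x y = adj y x) ->
  0 < t -> Gt eqdec V adj v t = 1.
Proof.
  intros Hnd Hv Hsym Ht. rewrite <- (Gt_0 eqdec V adj v Hnd Hv).
  symmetry. apply eq_is_derive; auto. intros s _. apply Gt_derive; auto.
Qed.

Lemma natsum_perm {A} (g : A -> nat) l l' : Permutation l l' ->
  fold_right Nat.add 0%nat (map g l) = fold_right Nat.add 0%nat (map g l').
Proof. intros HP; induction HP; simpl; lia. Qed.

Lemma NoDup_map_inj {A B} (f : A -> B) l : NoDup l ->
  (forall x y, In x l -> In y l -> f x = f y -> x = y) -> NoDup (map f l).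
Proof.
  induction l; intros Hnd Hinj; simpl; constructor.
  - intros Hin. apply in_map_iff in Hin. destruct Hin as [b [Hb Hbin]].
    inversion Hnd; subst. assert (b = a) by (apply Hinj; simpl; auto). subst; tauto.
  - inversion Hnd; subst. apply IHl; auto. intros; apply Hinj; simpl; auto.
Qed.

Lemma walks_inv {T} eqdec (V : list T) adj (s : T -> T) : NoDup V ->
  (forall x, In x V -> In (s x) V) ->
  (forall x y, In x V -> In y V -> s x = s y -> x = y) ->
  (forall x y, In x V -> In y V -> adj (s x) (s y) = adj x y) ->
  forall m x y, In x V -> In y V -> walks eqdec V adj m (s x) (s y) = walks eqdec V adj m x y.
Proof.
  intros Hnd Hin Hinj Hadj.
  assert (HP : Permutation (map s V) V).
  { apply Permutation_map_same_l. apply NoDup_map_inj; auto.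
    intros z Hz. apply in_map_iff in Hz. destruct Hz as [w [<- Hw]]. auto. }
  induction m; intros x y Hx Hy; simpl.
  - destruct (eqdec (s x) (s y)); destruct (eqdec x y); subst; auto.
    + exfalso. apply n. apply Hinj; auto.
    + congruence.
  - rewrite <- (natsum_perm _ _ _ HP). rewrite map_map. f_equal. apply map_ext_in.
    intros w Hw. rewrite Hadj by auto. rewrite IHm by auto. reflexivity.
Qed.

Lemma entry_id {T} eqdec (V : list T) adj t u v re im :
  transition_entry eqdec V adj t u v re im ->
  re = Rf eqdec V adj v u t /\ im = If eqdec V adj v u t.
Proof.
  intros [Hre Him]. split.
  - eapply uniqueness_sum; [apply Hre|]. apply is_series_Reals.
    pose proof (Rf_is eqdec V adj v u t) as H. unfold is_pseries in H.
    eapply is_series_ext; [|apply H]. intros n. simpl.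
    change (pow_n t n * are eqdec V adj v u n = ipow_re n * t ^ n / INR (fact n) * INR (walks eqdec V adj n u v)).
    rewrite pow_n_pow. unfold are, Wk. unfold Rdiv. ring.
  - eapply uniqueness_sum; [apply Him|]. apply is_series_Reals.
    pose proof (If_is eqdec V adj v u t) as H. unfold is_pseries in H.
    eapply is_series_ext; [|apply H]. intros n. simpl.
    change (pow_n t n * aim eqdec V adj v u n = ipow_im n * t ^ n / INR (fact n) * INR (walks eqdec V adj n u v)).
    rewrite pow_n_pow. unfold aim, Wk. unfold Rdiv. ring.
Qed.

Lemma noPST {T} eqdec (V : list T) adj (s : T -> T) u v tau : NoDup V ->
  (forall x y, adj x y = adj y x) ->
  (forall x, In x V -> In (s x) V) ->
  (forall x y, In x V -> In y V -> s x = s y -> x = y) ->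
  (forall x y, In x V -> In y V -> adj (s x) (s y) = adj x y) ->
  s v = v -> s u <> u -> PST_at eqdec V adj u v tau -> False.
Proof.
  intros Hnd Hsym Hin Hinj Hadj Hv Hu [Hu' [Hv' [Huv [Ht [re [im [Hent Hone]]]]]]].
  destruct (entry_id _ _ _ _ _ _ _ _ Hent) as [-> ->].
  pose proof (Gt_1 eqdec V adj v tau Hnd Hv' Hsym Ht) as HG. unfold Gt in HG.
  set (f := fun u0 => Rf eqdec V adj v u0 tau * Rf eqdec V adj v u0 tau + If eqdec V adj v u0 tau * If eqdec V adj v u0 tau) in HG.
  assert (Hf : f (s u) = f u).
  { unfold f, Rf, If.
    rewrite (PSeries_ext (are eqdec V adj v (s u)) (are eqdec V adj v u)).
    rewrite (PSeries_ext (aim eqdec V adj v (s u)) (aim eqdec V adj v u)). reflexivity.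
    all: intros n; unfold are, aim, Wk; rewrite <- Hv at 1; rewrite walks_inv; auto. }
  assert (H2 : f u + f (s u) <= rsum f V).
  { apply rsum_ge2; auto. intros x. unfold f. nra. }
  assert (f u = 1) by (unfold f; simpl in Hone; lra).
  lra.
Qed.

Lemma ipow_even q : ipow_re (2 * q) = (-1) ^ q /\ ipow_im (2 * q) = 0.
Proof.
  induction q.
  - unfold ipow_re, ipow_im. simpl. split; lra.
  - replace (2 * S q)%nat with (S (S (2 * q))) by lia.
    destruct (ipow_S (S (2 * q))) as [E1 E2]. destruct (ipow_S (2 * q)) as [E3 E4].
    rewrite E1, E2, E4, E3. destruct IHq as [-> ->]. simpl. split; lra.
Qed.

Lemma ipow_odd q : ipow_re (S (2 * q)) = 0 /\ ipow_im (S (2 * q)) = (-1) ^ q.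
Proof. destruct (ipow_S (2 * q)) as [-> ->]. destruct (ipow_even q) as [-> ->]. split; lra. Qed.

Lemma infsum_ext (f g : nat -> R) l : (forall n, f n = g n) -> infinite_sum f l -> infinite_sum g l.
Proof.
  intros E H eps Heps. destruct (H eps Heps) as [N HN]. exists N. intros n Hn.
  rewrite <- (sum_eq f g) by auto. auto.
Qed.

Lemma infsum_zero : infinite_sum (fun _ => 0) 0.
Proof. intros eps Heps. exists O. intros n _. rewrite sum_eq_R0 by auto. unfold R_dist. rewrite Rminus_0_r, Rabs_R0. auto. Qed.

Lemma sin_series (t : R) (w : nat -> nat) : (forall m, w m = if Nat.odd m then 1%nat else 0%nat) ->
  infinite_sum (fun m => ipow_im m * t ^ m / INR (fact m) * INR (w m)) (sin t).
Proof.
  intros Hw. set (f := fun m => ipow_im m * t ^ m / INR (fact m) * INR (w m)).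
  set (b := fun i => sin_n i * t ^ (2 * i + 1)).
  assert (Fe : forall q, f (2 * q)%nat = 0).
  { intros q. unfold f. rewrite Hw. replace (Nat.odd (2 * q)) with false. simpl. lra.
    rewrite <- Nat.negb_even, Nat.even_mul. simpl. auto. }
  assert (Fo : forall q, f (S (2 * q)) = b q).
  { intros q. unfold f, b, sin_n. rewrite Hw. replace (Nat.odd (S (2 * q))) with true.
    destruct (ipow_odd q) as [_ ->]. replace (2 * q + 1)%nat with (S (2 * q)) by lia. simpl INR at 2. field.
    apply INR_fact_neq_0.
    rewrite Nat.odd_succ, Nat.even_mul. auto. }
  assert (S1 : forall N, sum_f_R0 f (S (2 * N)) = sum_f_R0 b N).
  { induction N. assert (A0 := Fe 0%nat); assert (A1 := Fo 0%nat); simpl in A0, A1 |- *; lra.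
    replace (S (2 * S N)) with (S (S (S (2 * N)))) by lia. rewrite tech5, tech5.
    rewrite IHN. replace (S (S (2 * N))) with (2 * S N)%nat by lia. rewrite Fe.
    replace (S (2 * S N)) with (S (2 * (S N))) by lia. rewrite Fo. simpl; lra. }
  assert (S2 : forall N, sum_f_R0 f (2 * S N) = sum_f_R0 b N).
  { intros N. replace (2 * S N)%nat with (S (S (2 * N))) by lia. rewrite tech5, S1.
    replace (S (S (2 * N))) with (2 * S N)%nat by lia. rewrite Fe. lra. }
  unfold sin. destruct (exist_sin (Rsqr t)) as [a Ha]. unfold sin_in, infinite_sum in Ha.
  intros eps Heps.
  assert (Hd : 0 < eps / (Rabs t + 1)) by (apply Rdiv_lt_0_compat; auto; pose proof (Rabs_pos t); lra).
  destruct (Ha _ Hd) as [N0 HN0]. exists (S (2 * N0)). intros n Hn.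
  assert (key : forall N, (N >= N0)%nat -> R_dist (sum_f_R0 b N) (t * a) < eps).
  { intros N HN. specialize (HN0 N HN).
    replace (sum_f_R0 b N) with (t * sum_f_R0 (fun i => sin_n i * t² ^ i) N).
    unfold R_dist in *. rewrite <- Rmult_minus_distr_l, Rabs_mult.
    pose proof (Rabs_pos t). pose proof (Rabs_pos (sum_f_R0 (fun i => sin_n i * t² ^ i) N - a)).
    apply Rlt_le_trans with (Rabs t * (eps / (Rabs t + 1)) + eps / (Rabs t + 1) * 1).
    nra. replace (Rabs t * (eps / (Rabs t + 1)) + eps / (Rabs t + 1) * 1) with eps. lra. field; lra.
    rewrite scal_sum. apply sum_eq. intros i _. unfold b. unfold Rsqr.
    replace (2 * i + 1)%nat with (S (2 * i)) by lia. rewrite <- pow_sqr. simpl. ring. }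
  destruct (Nat.Even_or_Odd n) as [[m Hm]|[m Hm]]; subst n.
  - destruct m as [|m]; [lia|]. rewrite S2. apply key. lia.
  - replace (2 * m + 1)%nat with (S (2 * m)) by lia. rewrite S1. apply key. lia.
Qed.

Lemma card_rep k : card_true (repeat true k ++ repeat false k) = k.
Proof.
  unfold card_true. rewrite filter_app, length_app.
  assert (A : forall k, length (filter (fun b : bool => b) (repeat true k)) = k) by (induction k0; simpl; auto).
  assert (B : forall k, length (filter (fun b : bool => b) (repeat false k)) = 0%nat) by (induction k0; simpl; auto).
  rewrite A, B. lia.
Qed.

Theorem mainTheorem3 (n k : nat) (hk : (1 <= k)%nat) (hn : (2 * k <= n)%nat) :
  Kneser_admits_PST n k <-> n = (2 * k)%nat.
Proof.
  split.
  - intros [u [v [tau HP]]].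
    destruct (Nat.eq_dec n (2 * k)) as [E|Ne]; auto. exfalso.
    pose proof HP as [Hu [Hv [Huv _]]].
    apply In_kv in Hu, Hv. destruct Hu as [Lu Cu]. destruct Hv as [Lv Cv].
    destruct (combin n k u v hk ltac:(lia) Lu Lv Cu Cv Huv) as [i [j [Hi [Hj [E1 E2]]]]].
    apply (noPST bl_eqdec (kneser_vertices n k) disjointb (swp i j) u v tau).
    + apply NoDup_kv.
    + apply disj_sym.
    + intros x Hx. apply In_kv in Hx. destruct Hx as [Lx Cx]. apply In_kv. split.
      rewrite swp_len; auto. rewrite (card_perm _ x); auto. apply swp_perm; lia.
    + intros x y Hx Hy E. apply In_kv in Hx, Hy.
      rewrite <- (swp_swp i j x), <- (swp_swp i j y) by lia. rewrite E. auto.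
    + intros x y Hx Hy. apply In_kv in Hx, Hy. apply swp_disj; lia.
    + apply swp_fix; auto; lia.
    + apply swp_move; auto; lia.
    + auto.
  - intros ->. set (V := kneser_vertices (2 * k) k).
    set (u := repeat true k ++ repeat false k). set (c := map negb u).
    assert (Hu : In u V). { apply In_kv. split. unfold u. rewrite length_app, !repeat_length. lia. apply card_rep. }
    assert (Hc : In c V). { apply In_kv. apply In_kv in Hu. destruct Hu. pose proof (card_negb u).
      unfold c. rewrite length_map. split; lia. }
    assert (Huc : u <> c). { unfold c, u. destruct k; [lia|]. simpl. intros H; discriminate. }
    assert (W : forall m, walks bl_eqdec V disjointb m u c = (if Nat.odd m then 1 else 0)%nat /\
                          walks bl_eqdec V disjointb m c c = (if Nat.odd m then 0 else 1)%nat).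
    { induction m.
      - simpl. destruct (bl_eqdec u c); [congruence|]. destruct (bl_eqdec c c); [|congruence]. auto.
      - simpl walks. rewrite (natsum_single (disjointb u) (fun w => walks bl_eqdec V disjointb m w c) V c),
          (natsum_single (disjointb c) (fun w => walks bl_eqdec V disjointb m w c) V u).
        all: try apply NoDup_kv; auto.
        + rewrite Nat.odd_succ, <- Nat.negb_odd. destruct IHm as [-> ->]. destruct (Nat.odd m); auto.
        + intros w Hw. rewrite (nbr2k k c w Hc Hw). unfold c. rewrite negb_negb_map. tauto.
        + intros w Hw. rewrite (nbr2k k u w Hu Hw). unfold c. tauto. }
    unfold Kneser_admits_PST, admits_PST, PST_at, transition_entry. fold V.
    exists u, c, (PI / 2). split; auto. split; auto. split; auto. split. pose proof PI_RGT_0; lra.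
    exists 0, 1. split; [split|simpl; lra].
    + apply (infsum_ext (fun _ => 0)); [|apply infsum_zero].
      intros m. destruct (W m) as [-> _]. destruct (Nat.Even_or_Odd m) as [[q ->]|[q ->]].
      * replace (Nat.odd (2 * q)) with false. simpl. lra. rewrite <- Nat.negb_even, Nat.even_mul. auto.
      * replace (2 * q + 1)%nat with (S (2 * q)) by lia. destruct (ipow_odd q) as [-> _]. lra.
    + rewrite <- sin_PI2. apply sin_series. intros m. apply W.
Qed.
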